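(* Let $\mathsf{P}>0$, $A_{\mathsf{u},k}>0$, $\sigma_k^2>0$, $\mathsf{g}_k>0$ for $k\in\{1,2\}$, $k_0,\eta>0$, and $\overline{\rho}\in(0,1]$. Set $\beta_k=\frac{A_{\mathsf{u},k}k_0^2\eta^2}{4\pi\sigma_k^2}$ and $\overline{\gamma}_{\mathsf{du},k}=\beta_k\mathsf{P}_k$. Consider the problem $$\max_{\mathsf{P}_1,\mathsf{P}_2\ge0,\ \mathsf{P}_1+\mathsf{P}_2\le\mathsf{P}}\ \log_2\big(1+\overline{\gamma}_{\mathsf{du},1}\mathsf{g}_1+\overline{\gamma}_{\mathsf{du},2}\mathsf{g}_2+\overline{\gamma}_{\mathsf{du},1}\overline{\gamma}_{\mathsf{du},2}\mathsf{g}_1\mathsf{g}_2\overline{\rho}\big).$$ Let $\xi=\dfrac{A_{\mathsf{u},1}\mathsf{g}_1/\sigma_1^2-A_{\mathsf{u},2}\mathsf{g}_2/\sigma_2^2}{A_{\mathsf{u},1}A_{\mathsf{u},2}k_0^2\eta^2\mathsf{g}_1\mathsf{g}_2\overline{\rho}/(4\pi\sigma_1^2\sigma_2^2)}$. Then an optimal power allocation is $$(\mathsf{P}_1^\star,\mathsf{P}_2^\star)=\begin{cases}(\mathsf{P},0)&\xi\ge\mathsf{P},\\(0,\mathsf{P})&\xi\le-\mathsf{P},\\\big(\tfrac{\mathsf{P}+\xi}{2},\tfrac{\mathsf{P}-\xi}{2}\big)&\text{otherwise}.\end{cases}$$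
   Context: In the paper this is the power allocation of the dual uplink channel of a two-user downlink channel served by a continuous-aperture array, where $\mathsf{g}_k$ are the users' channel gains and $\overline{\rho}=1-|\rho|^2$ with $\rho$ the channel correlation factor. *)

(* Defs.v *)
From Stdlib Require Import Reals.
Open Scope R_scope.

Definition log2 (x : R) : R := ln x / ln 2.

Definition beta (Au k0 eta sigma2 : R) : R :=
  Au * k0 ^ 2 * eta ^ 2 / (4 * PI * sigma2).

Definition rate (Au1 Au2 s1 s2 g1 g2 k0 eta rhobar P1 P2 : R) : R :=
  let gam1 := beta Au1 k0 eta s1 * P1 in
  let gam2 := beta Au2 k0 eta s2 * P2 in
  log2 (1 + gam1 * g1 + gam2 * g2 + gam1 * gam2 * g1 * g2 * rhobar).

Definition feasible (P P1 P2 : R) : Prop :=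
  0 <= P1 /\ 0 <= P2 /\ P1 + P2 <= P.

Definition xi (Au1 Au2 s1 s2 g1 g2 k0 eta rhobar : R) : R :=
  (Au1 * g1 / s1 - Au2 * g2 / s2) /
  (Au1 * Au2 * k0 ^ 2 * eta ^ 2 * g1 * g2 * rhobar / (4 * PI * s1 * s2)).

Definition Pstar (P x : R) : R * R :=
  if Rle_dec P x then (P, 0)
  else if Rle_dec x (- P) then (0, P)
  else ((P + x) / 2, (P - x) / 2).

(* Main.v *)
Require Import Defs.
From Stdlib Require Import Reals Lra Psatz.
Open Scope R_scope.

Lemma ln_le' (u v : R) : 0 < u -> u <= v -> ln u <= ln v.
Proof. intros Hu [H|H]; [left; apply ln_increasing; auto | subst; right; reflexivity]. Qed.

Lemma keyineq (a c d x P P1 P2 : R) :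
  0 < P -> 0 < a -> 0 < c -> 0 < d -> a - c = x * d ->
  feasible P P1 P2 ->
  let Q1 := fst (Pstar P x) in let Q2 := snd (Pstar P x) in
  feasible P Q1 Q2 /\
  1 + a * P1 + c * P2 + d * P1 * P2 <= 1 + a * Q1 + c * Q2 + d * Q1 * Q2.
Proof.
  intros HP Ha Hc Hd Hx [H1 [H2 H3]] Q1 Q2.
  assert (Hm : 1 + a * P1 + c * P2 + d * P1 * P2 <=
               1 + a * P1 + c * (P - P1) + d * P1 * (P - P1)).
  { assert (0 <= (c + d * P1) * (P - P1 - P2)) by (apply Rmult_le_pos; nra).
    nra. }
  assert (Hg : forall t, 1 + a * t + c * (P - t) + d * t * (P - t) =
     1 + c * P + d * ((P + x) * t - t * t)).
  { intro t. replace a with (c + x * d) by lra. ring. }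
  rewrite Hg in Hm.
  unfold Q1, Q2, Pstar, feasible.
  destruct (Rle_dec P x) as [Hpx|Hpx]; simpl.
  - split; [lra|]. eapply Rle_trans; [exact Hm|].
    pose proof (Hg P) as HgP. replace (P - P) with 0 in HgP by ring. rewrite HgP.
    assert (0 <= d * ((P - P1) * (x - P1))) by (apply Rmult_le_pos; nra).
    nra.
  - destruct (Rle_dec x (- P)) as [Hxp|Hxp]; simpl.
    + split; [lra|]. eapply Rle_trans; [exact Hm|].
      pose proof (Hg 0) as HgP. replace (P - 0) with P in HgP by ring. rewrite HgP.
      assert (0 <= d * (P1 * (P1 - P - x))) by (apply Rmult_le_pos; nra).
      nra.
    + split; [lra|]. eapply Rle_trans; [exact Hm|].
      replace ((P - x) / 2) with (P - (P + x) / 2) by field.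
      rewrite (Hg ((P + x) / 2)).
      assert (0 <= d * ((P1 - (P+x)/2) * (P1 - (P+x)/2))) by (apply Rmult_le_pos; [lra | apply Rle_0_sqr]).
      nra.
Qed.

(* s1, s2 denote the noise variances sigma_1^2, sigma_2^2. *)
Theorem lemma3 (P Au1 Au2 s1 s2 g1 g2 k0 eta rhobar : R) :
  0 < P -> 0 < Au1 -> 0 < Au2 -> 0 < s1 -> 0 < s2 -> 0 < g1 -> 0 < g2 ->
  0 < k0 -> 0 < eta -> 0 < rhobar -> rhobar <= 1 ->
  let x := xi Au1 Au2 s1 s2 g1 g2 k0 eta rhobar in
  let P1s := fst (Pstar P x) in
  let P2s := snd (Pstar P x) in
  feasible P P1s P2s /\
  forall P1 P2 : R, feasible P P1 P2 ->
    rate Au1 Au2 s1 s2 g1 g2 k0 eta rhobar P1 P2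
    <= rate Au1 Au2 s1 s2 g1 g2 k0 eta rhobar P1s P2s.
Proof.
  intros HP HA1 HA2 Hs1 Hs2 Hg1 Hg2 Hk He Hr Hr1 x P1s P2s.
  set (b1 := beta Au1 k0 eta s1).
  set (b2 := beta Au2 k0 eta s2).
  assert (HPI : 0 < PI) by exact PI_RGT_0.
  assert (Hb1 : 0 < b1).
  { unfold b1, beta. apply Rdiv_lt_0_compat; [|nra].
    repeat apply Rmult_lt_0_compat; try apply pow_lt; lra. }
  assert (Hb2 : 0 < b2).
  { unfold b2, beta. apply Rdiv_lt_0_compat; [|nra].
    repeat apply Rmult_lt_0_compat; try apply pow_lt; lra. }
  set (a := b1 * g1). set (c := b2 * g2). set (d := b1 * b2 * g1 * g2 * rhobar).
  assert (Hx : a - c = x * d).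
  { unfold a, c, d, x, b1, b2, beta, xi. field.
    repeat split; try lra; try (apply Rgt_not_eq; apply pow_lt; lra). }
  assert (Ha : 0 < a) by (unfold a; apply Rmult_lt_0_compat; lra).
  assert (Hc : 0 < c) by (unfold c; apply Rmult_lt_0_compat; lra).
  assert (Hd : 0 < d).
  { unfold d. apply Rmult_lt_0_compat; [|lra]. apply Rmult_lt_0_compat; [|lra]. apply Rmult_lt_0_compat; [|lra]. apply Rmult_lt_0_compat; lra. }
  assert (Hf0 : feasible P 0 0) by (unfold feasible; lra).
  destruct (keyineq a c d x P 0 0 HP Ha Hc Hd Hx Hf0) as [Hfs _].
  split; [exact Hfs|].
  intros P1 P2 Hf.
  destruct (keyineq a c d x P P1 P2 HP Ha Hc Hd Hx Hf) as [_ Hk2].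
  unfold rate, log2. fold b1 b2.
  apply Rmult_le_compat_r.
  { left. apply Rinv_0_lt_compat. rewrite <- ln_1. apply ln_increasing; lra. }
  apply ln_le'.
  { destruct Hf as [? [? ?]].
    assert (0 <= b1 * P1) by (apply Rmult_le_pos; lra).
    assert (0 <= b2 * P2) by (apply Rmult_le_pos; lra).
    assert (0 <= b1 * P1 * g1) by (apply Rmult_le_pos; lra).
    assert (0 <= b2 * P2 * g2) by (apply Rmult_le_pos; lra).
    assert (0 <= b1 * P1 * (b2 * P2)) by (apply Rmult_le_pos; lra).
    assert (0 <= b1 * P1 * (b2 * P2) * g1) by (apply Rmult_le_pos; lra).
    assert (0 <= b1 * P1 * (b2 * P2) * g1 * g2) by (apply Rmult_le_pos; lra).
    assert (0 <= b1 * P1 * (b2 * P2) * g1 * g2 * rhobar) by (apply Rmult_le_pos; lra).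
    lra. }
  replace (b1 * P1 * g1) with (a * P1) by (unfold a; ring).
  replace (b2 * P2 * g2) with (c * P2) by (unfold c; ring).
  replace (b1 * P1 * (b2 * P2) * g1 * g2 * rhobar) with (d * P1 * P2) by (unfold d; ring).
  replace (b1 * P1s * g1) with (a * P1s) by (unfold a; ring).
  replace (b2 * P2s * g2) with (c * P2s) by (unfold c; ring).
  replace (b1 * P1s * (b2 * P2s) * g1 * g2 * rhobar) with (d * P1s * P2s) by (unfold d; ring).
  exact Hk2.
Qed.
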